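(* Consider a stationary memoryless uncertain channel with single-symbol map $N$ as described in the context, and let $0\le\delta_1<m_{\mathscr{Y}}(V_N)$. Let $\bar X$ be a one-step transmitted UV with $[\![\bar X]\!]\subseteq\mathscr{X}$, $\bar Y$ its received UV, and $\bar\delta\ge0$ such that $\bar X\in\mathscr{F}_{\bar\delta}(1)$, $\bar\delta\le\delta_1/m_{\mathscr{Y}}([\![\bar Y]\!])$ and $$I_{\bar\delta/|[\![\bar X]\!]|}(\bar Y;\bar X)=\sup\Big\{I_{\tilde\delta/|[\![X(1)]\!]|}(Y(1);X(1)) : \tilde\delta\ge0,\ X(1)\in\mathscr{F}_{\tilde\delta}(1),\ \tilde\delta\le\delta_1/m_{\mathscr{Y}}([\![Y(1)]\!])\Big\}.$$ Let $\hat\delta=\max_{S\in[\![\bar Y|\bar X]\!]^*_{\bar\delta/|[\![\bar X]\!]|}} m_{\mathscr{Y}}(S)/m_{\mathscr{Y}}([\![\bar Y]\!])$. If for all $n>1$ we have $\bar\delta(\hat\delta\,|[\![\bar X]\!]|)^{n-1}\le\delta_n<1$, then under the product uncertainty assumption $C_N(\{\delta_n\})_*=I_{\bar\delta/|[\![\bar X]\!]|}(\bar Y;\bar X)$.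
   Context: Uncertain variables (UVs): a UV is a map $U$ from a sample space $\Omega$ to a set; jointly considered UVs share $\Omega$. $[\![U]\!]=\{U(\omega)\}$; $[\![U|w]\!]=\{U(\omega):W(\omega)=w\}$, $[\![U|W]\!]=\{[\![U|w]\!]:w\in[\![W]\!]\}$. An uncertainty function on a set $\mathscr{U}$ is a map $m$ on subsets of $\mathscr{U}$ with $m(\emptyset)=0$, $0<m(S)<\infty$ for nonempty $S$, $\max\{m(S_1),m(S_2)\}\le m(S_1\cup S_2)$. Association: $\mathscr{A}(X;Y)=\{m_{\mathscr{X}}([\![X|y_1]\!]\cap[\![X|y_2]\!])/m_{\mathscr{X}}([\![X]\!]):y_1\ne y_2\in[\![Y]\!]\}\setminus\{0\}$, $\mathscr{A}(Y;X)=\{m_{\mathscr{Y}}([\![Y|x_1]\!]\cap[\![Y|x_2]\!])/m_{\mathscr{Y}}([\![Y]\!]):x_1\ne x_2\in[\![X]\!]\}\setminus\{0\}$; $\mathscr{A}\succ\delta$: all elements $>\delta$ (false for $\emptyset$); $\mathscr{A}\preceq\delta$: all elements $\le\delta$ (true for $\emptyset$); $(X,Y)\stackrel{d}{\leftrightarrow}(\delta_1,\delta_2)$ iff $\mathscr{A}(X;Y)\succ\delta_1,\mathscr{A}(Y;X)\succ\delta_2$; $(X,Y)\stackrel{a}{\leftrightarrow}(\delta_1,\delta_2)$ iff $\mathscr{A}(X;Y)\preceq\delta_1,\mathscr{A}(Y;X)\preceq\delta_2$. $\delta$-mutual information: for UVs $U$ (with uncertainty function $m_{\mathscr{U}}$)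 and $W$, $u,u'\in[\![U]\!]$ are $\delta$-connected via $[\![U|W]\!]$ if there are $w_1,\dots,w_N\in[\![W]\!]$ with $u\in[\![U|w_1]\!]$, $u'\in[\![U|w_N]\!]$, $m_{\mathscr{U}}([\![U|w_i]\!]\cap[\![U|w_{i-1}]\!])/m_{\mathscr{U}}([\![U]\!])>\delta$ for $1<i\le N$; a set is $\delta$-connected if all pairs of its points are. A $\delta$-overlap family $[\![U|W]\!]^*_\delta$ is a family of distinct subsets covering $[\![U]\!]$, of largest cardinality among covering families with (i) each member $\delta$-connected and containing some $[\![U|w]\!]$; (ii) distinct members $S_1,S_2$ satisfy $m_{\mathscr{U}}(S_1\cap S_2)\le\delta\,m_{\mathscr{U}}([\![U]\!])$; (iii) each $[\![U|w]\!]$ contained in some member. $I_\delta(U;W)=\log_2|[\![U|W]\!]^*_\delta|$ if such a family exists, else $0$. Stationary memoryless channel: $\mathscr{X}$ is a totally bounded normed metric space, $\mathscr{Y}$ an output set, $N:\mathscr{X}\to2^{\mathscr{Y}}$; for $x(1:n)\in\mathscr{X}^n$, $S_N(x(1:n))=N(x(1))\times\cdots\times N(x(n))$. $m_{\mathscr{Y}}$ (resp. $m_{\mathscr{X}}$) is an uncertainty function on each $\mathscr{Y}^n$ (resp. $\mathscr{X}^n$), with $m_{\mathscr{Y}}(\mathscr{Y}^n)=1$. $V_N=N(x^* )$ with $x^*$ minimizing $m_{\mathscr{Y}}(N(x))$. A discrete $\mathcal{C}_n\subseteq\mathscr{X}^n$ is $(N,\delta_n)$-distinguishable if $m_{\mathscr{Y}}(S_N(x_1(1:n))\cap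 S_N(x_2(1:n)))/m_{\mathscr{Y}}(\mathscr{Y}^n)\le\delta_n/|\mathcal{C}_n|$ for all distinct codewords; $R_{\delta_n}=\sup\frac1n\log_2|\mathcal{C}_n|$ over such codebooks; $C_N(\{\delta_n\})_*=\inf_{n\ge1}R_{\delta_n}$. For a codebook $\mathcal{C}_n$, transmitted UV $X(1:n)$ and received UV $Y(1:n)$ satisfy $[\![X(1:n)]\!]=\mathcal{C}_n$, $[\![Y(1:n)]\!]=\bigcup_{x(1:n)\in\mathcal{C}_n}S_N(x(1:n))$, $[\![Y(1:n)|x(1:n)]\!]=\{y\in[\![Y(1:n)]\!]:y\in S_N(x(1:n))\}$, $[\![X(1:n)|y(1:n)]\!]=\{x\in[\![X(1:n)]\!]:y(1:n)\in S_N(x)\}$. $\mathscr{F}_\delta(n)$ is the set of transmitted UVs $X(1:n)$ with $[\![X(1:n)]\!]\subseteq\mathscr{X}^n$ such that $(X(1:n),Y(1:n))\stackrel{d}{\leftrightarrow}(0,\delta/|[\![X(1:n)]\!]|)$ or $(X(1:n),Y(1:n))\stackrel{a}{\leftrightarrow}(1,\delta/|[\![X(1:n)]\!]|)$. Product uncertainty assumption: $m_{\mathscr{Y}}(S_1\times\cdots\times S_n)=\prod_i m_{\mathscr{Y}}(S_i)$ for all $n$ and $S_i\subseteq\mathscr{Y}$. *)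

(* Defs.v *)
From mathcomp Require Import all_boot all_order all_algebra.
From mathcomp Require Import all_classical all_reals all_analysis.
Import Order.TTheory GRing.Theory Num.Theory.

Unset Implicit Arguments.
Unset Strict Implicit.
Unset Printing Implicit Defensive.

Local Open Scope classical_set_scope.
Local Open Scope ring_scope.

Definition log2 {R : realType} (x : R) : R := ln x / ln 2.

(* cardinality of a finite set (0 if infinite) *)
Definition scard {T} (A : set T) : nat :=
  match pselect (exists k, card_eq A `I_k) with
  | left e => projT1 (cid e)
  | right _ => 0%N
  end.

Definition uncertainty_function {R : realType} {T} (m : set T -> R) : Prop :=
  m set0 = 0 /\ (forall S, S !=set0 -> 0 < m S) /\
  (forall S1 S2, Num.max (m S1) (m S2) <= m (S1 `|` S2)).

Definition totally_bounded_space {R : realType} (X : pseudoMetricType R) : Prop :=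
  forall e : R, 0 < e -> exists A : set X, finite_set A /\
    forall x : X, exists a, A a /\ ball a e x.

(* m  : uncertainty function on the U-space; Ur = [[U]];              *)
(* Wr = [[W]]; cond w = [[U|w]].                                      *)
Section Overlap.
Context {R : realType} {T W : Type} (m : set T -> R) (Ur : set T)
  (Wr : set W) (cond : W -> set T) (d : R).

Definition dconnected_pt (u u' : T) : Prop :=
  exists (w0 : W) (s : seq W),
    Wr w0 /\ all (fun w => `[< Wr w >]) s /\ cond w0 u /\ cond (last w0 s) u' /\
    path (fun a b => `[< m (cond b `&` cond a) / m Ur > d >]) w0 s.

Definition dconnected_set (S : set T) : Prop :=
  forall u u', S u -> S u' -> dconnected_pt u u'.

Definition overlap_candidate (F : set (set T)) : Prop :=
  \bigcup_(S in F) S = Ur /\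
  (forall S, F S -> dconnected_set S /\ exists w, Wr w /\ cond w `<=` S) /\
  (forall S1 S2, F S1 -> F S2 -> S1 <> S2 -> m (S1 `&` S2) <= d * m Ur) /\
  (forall w, Wr w -> exists S, F S /\ cond w `<=` S).

Definition overlap_family (F : set (set T)) : Prop :=
  overlap_candidate F /\ finite_set F /\
  forall F', overlap_candidate F' -> finite_set F' /\ (scard F' <= scard F)%N.

Definition Idelta : R :=
  match pselect (exists F, overlap_family F) with
  | left e => log2 (scard (projT1 (cid e)))%:R
  | right _ => 0
  end.
End Overlap.

Section Channel.
Context {R : realType} {X Y : Type} (N : X -> set Y).

Definition SN {n} (x : 'I_n -> X) : set ('I_n -> Y) :=
  [set y | forall i, N (x i) (y i)].

(* codebook C = [[X(1:n)]] ; received range [[Y(1:n)]] *)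
Definition Yrange {n} (C : set ('I_n -> X)) : set ('I_n -> Y) :=
  \bigcup_(x in C) SN x.
Definition Ycond {n} (C : set ('I_n -> X)) (x : 'I_n -> X) : set ('I_n -> Y) :=
  Yrange C `&` SN x.
Definition Xcond {n} (C : set ('I_n -> X)) (y : 'I_n -> Y) : set ('I_n -> X) :=
  [set x | C x /\ SN x y].

Definition lift1 (S : set Y) : set ('I_1 -> Y) := [set y | S (y ord0)].

Context (mX : forall n, set ('I_n -> X) -> R) (mY : forall n, set ('I_n -> Y) -> R).

Definition assocXY {n} (C : set ('I_n -> X)) : set R :=
  [set r | exists y1 y2, Yrange C y1 /\ Yrange C y2 /\ y1 <> y2 /\
     r = mX n (Xcond C y1 `&` Xcond C y2) / mX n C] `\` [set 0].
Definition assocYX {n} (C : set ('I_n -> X)) : set R :=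
  [set r | exists x1 x2, C x1 /\ C x2 /\ x1 <> x2 /\
     r = mY n (Ycond C x1 `&` Ycond C x2) / mY n (Yrange C)] `\` [set 0].

Definition assoc_succ (A : set R) (d : R) : Prop := A !=set0 /\ forall r, A r -> d < r.
Definition assoc_preceq (A : set R) (d : R) : Prop := forall r, A r -> r <= d.

Definition dissociated {n} (C : set ('I_n -> X)) (d1 d2 : R) : Prop :=
  assoc_succ (assocXY C) d1 /\ assoc_succ (assocYX C) d2.
Definition associated {n} (C : set ('I_n -> X)) (d1 d2 : R) : Prop :=
  assoc_preceq (assocXY C) d1 /\ assoc_preceq (assocYX C) d2.

(* X(1:n) in F_delta(n), the UV being represented by its (finite, nonempty) range C *)
Definition Fdelta (n : nat) (d : R) (C : set ('I_n -> X)) : Prop :=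
  finite_set C /\ C !=set0 /\
  (dissociated C 0 (d / (scard C)%:R) \/ associated C 1 (d / (scard C)%:R)).

Definition IYX {n} (C : set ('I_n -> X)) (d : R) : R :=
  Idelta (mY n) (Yrange C) C (Ycond C) (d / (scard C)%:R).

Definition distinguishable (n : nat) (d : R) (C : set ('I_n -> X)) : Prop :=
  finite_set C /\ C !=set0 /\
  forall x1 x2, C x1 -> C x2 -> x1 <> x2 ->
    mY n (SN x1 `&` SN x2) / mY n setT <= d / (scard C)%:R.

Definition rate (n : nat) (d : R) : \bar R :=
  ereal_sup [set ((n%:R)^-1 * log2 (scard C)%:R)%:E | C in distinguishable n d].

Definition capacity (delta : nat -> R) : \bar R :=
  ereal_inf [set rate n (delta n) | n in [set n : nat | (0 < n)%N]].

Definition product_assumption : Prop :=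
  forall n (S : 'I_n -> set Y),
    mY n [set y | forall i, S i (y i)] = \prod_(i < n) mY 1 (lift1 (S i)).
End Channel.

(* Main.v *)
Require Import Defs.
From mathcomp Require Import all_boot all_order all_algebra.
From mathcomp Require Import all_classical all_reals all_analysis.
From mathcomp Require Import ring lra.
Import Order.TTheory GRing.Theory Num.Theory.
Local Open Scope classical_set_scope.
Local Open Scope ring_scope.
Lemma scardE {T} {A : set T} {n} : (A #= `I_n)%card -> scard A = n.
Proof.
move=> An; rewrite /scard; case: pselect => [e|[]]; last by exists n.
case: (cid e) => k /= Ak; apply/card_eq_II.
exact: card_eq_trans (card_esym Ak) An.
Qed.

Lemma scard_le {T U} (A : set T) (B : set U) :
  (A #<= B)%card -> finite_set B -> finite_set A /\ (scard A <= scard B)%N.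
Proof.
move=> AB fB; have fA := card_le_finite AB fB.
split=> //; case: fA => k Ak; case: fB => m Bm.
rewrite (scardE Ak) (scardE Bm) -card_le_II.
by rewrite -(card_le_eql Ak) -(card_le_eqr Bm).
Qed.

Lemma inj_le {T U} (A : set T) (B : set U) (g : T -> U) :
  {in A &, injective g} -> (forall a, A a -> B (g a)) -> (A #<= B)%card.
Proof.
move=> gi gAB; rewrite -(card_le_eql (inj_card_eq gi)).
by apply: subset_card_le => _ [a Aa <-]; apply: gAB.
Qed.

Lemma scard_image {T U} (A : set T) (g : T -> U) :
  {in A &, injective g} -> scard (g @` A) = scard A.
Proof.
move=> gi; rewrite /scard.
have E := inj_card_eq gi.
case: pselect => [e|ne]; case: pselect => [e'|ne'] //.
- case: (cid e) => k /= Ak; case: (cid e') => k' /= Ak'.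
  apply/card_eq_II; apply: card_eq_trans (card_esym Ak) _.
  exact: card_eq_trans E Ak'.
- by exfalso; apply: ne'; case: e => k Ak; exists k; apply: card_eq_trans (card_esym E) Ak.
- by exfalso; apply: ne; case: e' => k Ak; exists k; apply: card_eq_trans E Ak.
Qed.

Lemma scard_finT (T : finType) : scard [set: T] = #|T|.
Proof.
apply: scardE.
have E : (enum_rank @` [set: T] #= [set: T])%card.
  by apply: inj_card_eq => x y _ _; apply: enum_rank_inj.
have EE : enum_rank @` [set: T] = [set: 'I_#|T|].
  by apply/seteqP; split=> // i _; exists (enum_val i) => //; rewrite enum_valK.
rewrite EE in E.
rewrite card_eq_sym; apply: card_eq_trans card_II _.
exact: E.
Qed.

Section Ov.
Context {R : realType} {T W : Type} (m : set T -> R) (Ur : set T)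
  (Wr : set W) (cond : W -> set T) (d : R).

Lemma um_le {mu : set T -> R} : uncertainty_function mu -> forall A B, A `<=` B -> mu A <= mu B.
Proof.
move=> [_ [_ h]] A B AB; have := h A B; rewrite (setUidr AB).
by apply: le_trans; rewrite le_max lexx.
Qed.

Lemma um_ge0 {mu : set T -> R} : uncertainty_function mu -> forall A, 0 <= mu A.
Proof.
move=> [h0 [hp _]] A; have [->|/set0P ne] := eqVneq A set0; first by rewrite h0.
exact/ltW/hp.
Qed.

Lemma Idelta_fam G : overlap_family m Ur Wr cond d G ->
  Idelta m Ur Wr cond d = log2 (scard G)%:R.
Proof.
move=> [cG [fG maxG]]; rewrite /Idelta; case: pselect => [e|ne]; last first.
  by exfalso; apply: ne; exists G.
case: (cid e) => Fc /= [cFc [fFc maxFc]].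
have [_ h1] := maxFc G cG; have [_ h2] := maxG Fc cFc.
by have -> : scard Fc = scard G by apply/eqP; rewrite eqn_leq h1 h2.
Qed.

Hypothesis um : uncertainty_function m.
Hypothesis fW : finite_set Wr.
Hypothesis w0 : W.
Hypothesis big : forall w, Wr w -> d * m Ur < m (cond w).

Lemma cand_le F' : overlap_candidate m Ur Wr cond d F' ->
  finite_set F' /\ (scard F' <= scard Wr)%N.
Proof.
move=> [_ [h2 [h3 _]]].
have ex : forall S, exists w, F' S -> Wr w /\ cond w `<=` S.
  move=> S; have [FS|nFS] := pselect (F' S); last by exists w0.
  by have [_ [w hw]] := h2 S FS; exists w.
have [g hg] := choice ex.
apply: scard_le => //; apply: (@inj_le _ _ _ _ g); last by move=> S /hg [].
move=> S1 S2; rewrite !inE => F1 F2 geq; apply/eqP/negPn/negP => /eqP ne.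
have := h3 _ _ F1 F2 ne; apply/negP; rewrite -ltNge.
have [W1 c1] := hg _ F1; have [W2 c2] := hg _ F2.
apply: (lt_le_trans (big _ W1)); apply: (um_le um) => t ct; split; first exact: c1.
by apply: c2; rewrite -geq.
Qed.

Hypothesis sep : forall w1 w2, Wr w1 -> Wr w2 -> w1 <> w2 ->
  m (cond w1 `&` cond w2) <= d * m Ur.
Hypothesis sub : forall w, Wr w -> cond w `<=` Ur.
Hypothesis cov : forall t, Ur t -> exists2 w, Wr w & cond w t.

Lemma cond_inj : {in Wr &, injective cond}.
Proof.
move=> w1 w2; rewrite !inE => W1 W2 ceq; case: (pselect (w1 = w2)) => // ne; exfalso.
have := sep _ _ W1 W2 ne; rewrite ceq setIid; apply/negP; rewrite -ltNge.
exact: big.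
Qed.

Lemma G_cand : overlap_candidate m Ur Wr cond d (cond @` Wr).
Proof.
split; [|split; [|split]].
- apply/seteqP; split.
    by move=> t [_ [w Ww <-] ct]; exact: sub ct.
  by move=> t /cov [w Ww ct]; exists (cond w) => //; exists w.
- move=> _ [w Ww <-]; split; last by exists w; split.
  move=> u u' cu cu'; by exists w, [::].
- move=> _ _ [w1 W1 <-] [w2 W2 <-] ne; apply: sep => // e; apply: ne; by rewrite e.
- by move=> w Ww; exists (cond w); split => //; exists w.
Qed.

Lemma G_family : Idelta m Ur Wr cond d = log2 (scard Wr)%:R.
Proof.
rewrite -(scard_image _ _ cond_inj); apply: Idelta_fam.
split; first exact: G_cand.
split; first exact: finite_image.
move=> F' cF'; have [fF' le] := cand_le _ cF'; split => //.
by rewrite (scard_image _ _ cond_inj).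
Qed.
End Ov.
Lemma arith (R : realFieldType) (dbar dhat U k k' Dn : R) (n : nat) :
  0 <= dbar -> 0 <= dhat -> 0 < U -> U <= 1 -> 0 < k -> k <= k' -> (0 < n)%N ->
  ((n = 1)%N -> dbar * U <= Dn) -> ((1 < n)%N -> dbar * (dhat * k') ^+ n.-1 <= Dn) ->
  dbar / k' * U * (dhat * U) ^+ n.-1 <= Dn / k ^+ n.
Proof.
move=> d0 h0 U0 U1 k0 kk n0 h1 h2.
have k'0 : 0 < k' by apply: lt_le_trans kk.
have kn0 : 0 < k ^+ n by apply: exprn_gt0.
rewrite ler_pdivlMr //.
case: n n0 h1 h2 kn0 => [//|[|p]] _ h1 h2 kn0.
  rewrite expr0 mulr1 expr1.
  have t1 : k / k' <= 1 by rewrite ler_pdivrMr // mul1r.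
  have t0 : 0 <= k / k' by apply: divr_ge0; apply: ltW.
  have e : dbar / k' * U * k = dbar * U * (k / k') by ring.
  rewrite e; apply: le_trans (h1 erefl); apply: ler_piMr => //; apply: mulr_ge0 => //; exact: ltW.
have := h2 erefl; rewrite /= => H.
apply: le_trans H.
rewrite !exprMn.
set a := dbar * dhat ^+ p.+1.
have a0 : 0 <= a by apply: mulr_ge0 => //; apply: exprn_ge0.
have -> : dbar / k' * U * (dhat ^+ p.+1 * U ^+ p.+1) * k ^+ p.+2 =
          a * ((U * k) ^+ p.+2 / k') by rewrite /a exprMn !exprS; field; apply/lt0r_neq0.
have -> : dbar * (dhat ^+ p.+1 * k' ^+ p.+1) = a * k' ^+ p.+1 by rewrite /a mulrA.
apply: ler_wpM2l => //.
rewrite ler_pdivrMr // -exprSr.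
apply: lerXn2r; rewrite ?nnegrE; [apply: mulr_ge0; apply: ltW => // | apply: ltW => // |].
rewrite -[k']mul1r; apply: ler_pM => //; apply: ltW => //.
Qed.

Lemma scard_pos T (A : set T) : finite_set A -> A !=set0 -> (0 < scard A)%N.
Proof.
move=> fA [a Aa].
have sa : [set a] `<=` A by move=> x ->.
have [_ le] := @scard_le _ _ [set a] A (subset_card_le sa) fA.
by rewrite (scardE card_set1) in le.
Qed.

Section Chan.
Context {R : realType} {X Y : Type} (N : X -> set Y)
  (mX : forall n, set ('I_n -> X) -> R) (mY : forall n, set ('I_n -> Y) -> R).
Hypothesis umX : forall n, uncertainty_function (mX n).
Hypothesis umY : forall n, uncertainty_function (mY n).
Hypothesis mYT : forall n, mY n setT = 1.
Variables (xstar : X) (dl : R).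
Hypothesis minx : forall x, mY 1 (lift1 (N xstar)) <= mY 1 (lift1 (N x)).
Hypothesis dl0 : 0 <= dl.
Hypothesis dlt : dl < mY 1 (lift1 (N xstar)).

Lemma SN1 (x : 'I_1 -> X) : SN N x = lift1 (N (x ord0)).
Proof.
apply/seteqP; split => y /=; first by apply.
by move=> h i; rewrite (ord1 i).
Qed.

Lemma Ycond_SN {n} {C : set ('I_n -> X)} {x} : C x -> Ycond N C x = SN N x.
Proof.
move=> Cx; apply/seteqP; split => y; first by case.
by move=> h; split => //; exists x.
Qed.

Lemma SNbig (x : 'I_1 -> X) : dl < mY 1 (SN N x).
Proof. by rewrite SN1; apply: lt_le_trans dlt (minx _). Qed.

Lemma Ypos (C : set ('I_1 -> X)) : C !=set0 -> 0 < mY 1 (Yrange N C).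
Proof.
move=> [x Cx]; apply: le_lt_trans dl0 _; apply: lt_le_trans (SNbig x) _.
by apply: (um_le (umY 1)) => y h; exists x.
Qed.

Lemma dist_IYX (C : set ('I_1 -> X)) : distinguishable N mY 1 dl C ->
  0 <= dl / mY 1 (Yrange N C) /\ Fdelta N mX mY 1 (dl / mY 1 (Yrange N C)) C /\
  IYX N mY C (dl / mY 1 (Yrange N C)) = log2 (scard C)%:R.
Proof.
move=> [fC [neC hC]].
have U0 := Ypos _ neC.
have c0 : (0 < (scard C)%:R :> R) by rewrite ltr0n; apply: scard_pos.
have c1 : (1 <= (scard C)%:R :> R) by rewrite ler1n; apply: scard_pos.
have dlc : dl / (scard C)%:R <= dl by rewrite ler_pdivrMr // ler_peMr.
have key : dl / mY 1 (Yrange N C) / (scard C)%:R * mY 1 (Yrange N C) = dl / (scard C)%:R.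
  by field; apply/andP; split; apply/lt0r_neq0.
have sepC : forall x1 x2, C x1 -> C x2 -> x1 <> x2 ->
    mY 1 (Ycond N C x1 `&` Ycond N C x2) <= dl / (scard C)%:R.
  move=> x1 x2 C1 C2 ne; rewrite (Ycond_SN C1) (Ycond_SN C2).
  by have := hC _ _ C1 C2 ne; rewrite mYT divr1.
split; first by apply: divr_ge0 => //; apply: ltW.
split.
  split => //; split => //; right; split.
    move=> r [[y1 [y2 [_ [_ [_ ->]]]]] _].
    have [x Cx] := neC.
    have mC : 0 < mX 1 C by have [_ [h _]] := umX 1; apply: h; exists x.
    rewrite ler_pdivrMr // mul1r; apply: (um_le (umX 1)) => z [[]] //.
  move=> r [[x1 [x2 [C1 [C2 [ne ->]]]]] _].
  rewrite mulrAC; apply: ler_wpM2r; first by rewrite invr_ge0 ltW.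
  exact: sepC.
have [x0 Cx0] := neC.
rewrite /IYX; apply: (@G_family _ _ _ (mY 1) (Yrange N C) C (Ycond N C) _ (umY 1) fC x0).
- move=> w Cw; rewrite key (Ycond_SN Cw); apply: le_lt_trans dlc _; exact: SNbig.
- by move=> w1 w2 C1 C2 ne; rewrite key; apply: sepC.
- by move=> w _ y [].
- by move=> y [x Cx h]; exists x => //; split => //; exists x.
Qed.

Lemma lower (Cbar : set ('I_1 -> X)) (dbar dhat : R) (F : set (set ('I_1 -> Y)))
  (delta : nat -> R) (n : nat) :
  product_assumption mY -> 0 <= dbar -> finite_set Cbar -> Cbar !=set0 ->
  dbar <= dl / mY 1 (Yrange N Cbar) ->
  overlap_family (mY 1) (Yrange N Cbar) Cbar (Ycond N Cbar)
    (dbar / (scard Cbar)%:R) F ->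
  (forall S, F S -> mY 1 S / mY 1 (Yrange N Cbar) <= dhat) ->
  (n = 1%N -> delta n = dl) ->
  ((1 < n)%N -> dbar * (dhat * (scard Cbar)%:R) ^+ n.-1 <= delta n) ->
  (0 < n)%N ->
  ((log2 (scard F)%:R)%:E <= rate N mY n (delta n))%E.
Proof.
move=> prod dbar0 fC [x0 Cx0] dbarle famF dhatmax hd1 hdelta n0.
set U := mY 1 (Yrange N Cbar).
set k' := scard Cbar.
set d := dbar / k'%:R.
have U0 : 0 < U by apply: Ypos; exists x0.
have U1 : U <= 1 by rewrite -(mYT 1); apply: (um_le (umY 1)).
have k'0 : (0 < k')%N by apply: scard_pos => //; exists x0.
have k'0r : (0 < k'%:R :> R) by rewrite ltr0n.
have dU : dbar * U <= dl by rewrite -ler_pdivlMr.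
have dUk : d * U <= dl.
  apply: le_trans dU; rewrite /d mulrAC ler_pdivrMr // ler_peMr ?ler1n //.
  by apply: mulr_ge0 => //; apply: ltW.
have bigC : forall w, Cbar w -> d * U < mY 1 (Ycond N Cbar w).
  by move=> w Cw; rewrite (Ycond_SN Cw); apply: le_lt_trans dUk (SNbig w).
have famF' := famF.
case: famF' => cF [fF _].
have [_ kle] := @cand_le _ _ _ (mY 1) (Yrange N Cbar) Cbar (Ycond N Cbar) d (umY 1) fC x0 bigC F cF.
case: cF => covF [hF2 [hF3 hF4]].
set k := scard F.
have k0 : (0 < k)%N.
  apply: scard_pos => //; have [S [FS _]] := hF4 x0 Cx0; by exists S.
have k0r : (0 < k%:R :> R) by rewrite ltr0n.
have [m Fm] := fF.
have km : k = m := scardE Fm.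
have [e [eF einj]] : exists e : nat -> set ('I_1 -> Y),
    (forall i, (i < k)%N -> F (e i)) /\ {in `I_k &, injective e}.
  move/card_esym: Fm; rewrite -km => /card_set_bijP [e [hf hi _]].
  by exists e; split => // i ik; apply: hf.
have ex : forall i, exists w, (i < k)%N -> Cbar w /\ Ycond N Cbar w `<=` e i.
  move=> i; have [ik|_] := ltnP i k; last by exists x0.
  by have [_ [w hw]] := hF2 _ (eF _ ik); exists w.
have [rho hrho] := choice ex.
have eUb : forall i, (i < k)%N -> mY 1 (e i) <= dhat * U.
  by move=> i ik; rewrite -ler_pdivrMr //; apply: dhatmax; apply: eF.
have eIb : forall i j, (i < k)%N -> (j < k)%N -> i <> j -> mY 1 (e i `&` e j) <= d * U.
  move=> i j ik jk ne; apply: hF3; [exact: eF|exact: eF|] => ee; apply: ne.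
  by apply: einj => //; rewrite inE.
have rinj : forall i j, (i < k)%N -> (j < k)%N -> rho i = rho j -> i = j.
  move=> i j ik jk rij; case: (pselect (i = j)) => // ne; exfalso.
  have := eIb _ _ ik jk ne; apply/negP; rewrite -ltNge.
  have [Ci si] := hrho _ ik; have [Cj sj] := hrho _ jk.
  apply: lt_le_trans (bigC _ Ci) _; apply: (um_le (umY 1)) => y yi; split.
    exact: si. by apply: sj; rewrite -rij.
have subL : forall i, (i < k)%N -> lift1 (N (rho i ord0)) `<=` e i.
  by move=> i ik y h; have [Ci si] := hrho _ ik; apply: si; rewrite (Ycond_SN Ci) SN1.
pose cw (f : {ffun 'I_n -> 'I_k}) : 'I_n -> X := fun i => rho (f i) ord0.
have cwinj : injective cw.
  move=> f g fg; apply/ffunP => i; apply: val_inj; apply: (rinj _ _ (ltn_ord _) (ltn_ord _)).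
  apply: funext => j; rewrite (ord1 j); exact: (congr1 (fun h => h i) fg).
set Cn := cw @` [set: {ffun 'I_n -> 'I_k}].
have scn : scard Cn = (k ^ n)%N.
  rewrite /Cn scard_image; last by move=> f g _ _; apply: cwinj.
  by rewrite scard_finT card_ffun !card_ord.
have dist : distinguishable N mY n (delta n) Cn.
  split; first exact: finite_image.
  split; first by exists (cw [ffun=> Ordinal k0]); exists [ffun=> Ordinal k0].
  move=> _ _ [f _ <-] [g _ <-] ne.
  have [i0 hi0] : exists i0, f i0 != g i0.
    case: (pselect (exists i, f i != g i)) => // nex; exfalso; apply: ne.
    congr cw; apply/ffunP => i; apply/eqP/negPn/negP => h; apply: nex; by exists i.
  rewrite mYT divr1 scn natrX.
  have -> : SN N (cw f) `&` SN N (cw g) =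
      [set y | forall i, (N (cw f i) `&` N (cw g i)) (y i)].
    apply/seteqP; split => y /=.
      by move=> [h1 h2] i; split; [apply: h1|apply: h2].
    by move=> h; split => i; have [] := h i.
  rewrite (prod n (fun i => N (cw f i) `&` N (cw g i))).
  have a0 : forall i, 0 <= mY 1 (lift1 (N (cw f i) `&` N (cw g i))).
    by move=> i; apply: (um_ge0 (umY 1)).
  have sub2 : forall i, lift1 (N (cw f i) `&` N (cw g i)) `<=` e (f i) `&` e (g i).
    by move=> i y [h1 h2]; split; [apply: (subL _ (ltn_ord _))|apply: (subL _ (ltn_ord _))].
  apply: le_trans (@arith _ dbar dhat U k%:R k'%:R (delta n) n dbar0 _ U0 U1 k0r _ n0 _ _); last first.
  - by move=> h; apply: hdelta.
  - by move=> h; rewrite (hd1 h).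
  - by rewrite ler_nat.
  - by apply: le_trans (dhatmax _ (eF _ k0)); apply: divr_ge0; [apply: (um_ge0 (umY 1))|apply: ltW].
  rewrite (bigD1 i0) //=; apply: ler_pM.
  - exact: a0.
  - by apply: prodr_ge0 => i _; apply: a0.
  - apply: le_trans (_ : mY 1 (e (f i0) `&` e (g i0)) <= _).
      exact: (um_le (umY 1)).
    apply: eIb => // h; move: hi0; rewrite (_ : f i0 = g i0) ?eqxx //; exact: val_inj.
  have -> : (dhat * U) ^+ n.-1 = \prod_(i < n | i != i0) (dhat * U).
    by rewrite prodr_const cardC1 card_ord.
  apply: ler_prod => i _; rewrite a0 /=.
  apply: le_trans (eUb _ (ltn_ord (f i))); apply: (um_le (umY 1)) => y /sub2 [] //.
have n0r : (n%:R : R) != 0 by rewrite pnatr_eq0 -lt0n.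
apply: le_trans (ereal_sup_ubound _); last by exists Cn.
rewrite lee_fin scn natrX /log2 lnXn //.
have l2 : ln (2 : R) != 0 by apply/lt0r_neq0; apply: ln_gt0; rewrite ltr1n.
rewrite le_eqVlt; apply/orP; left; apply/eqP; rewrite -mulr_natr.
by field; rewrite n0r l2.
Qed.
End Chan.

Theorem theorem13 (R : realType) (X : pseudoMetricType R) (Y : Type)
  (N : X -> set Y)
  (mX : forall n, set ('I_n -> X) -> R) (mY : forall n, set ('I_n -> Y) -> R)
  (delta : nat -> R) (xstar : X)
  (Cbar : set ('I_1 -> X)) (dbar dhat : R) (F : set (set ('I_1 -> Y))) :
  totally_bounded_space X ->
  (forall n, uncertainty_function (mX n)) ->
  (forall n, uncertainty_function (mY n)) ->
  (forall n, mY n setT = 1) ->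
  (* V_N = N(xstar), xstar minimizing m_Y(N(x)) *)
  (forall x, mY 1 (lift1 (N xstar)) <= mY 1 (lift1 (N x))) ->
  0 <= delta 1%N -> delta 1%N < mY 1 (lift1 (N xstar)) ->
  product_assumption mY ->
  0 <= dbar ->
  Fdelta N mX mY 1 dbar Cbar ->
  dbar <= delta 1%N / mY 1 (Yrange N Cbar) ->
  (IYX N mY Cbar dbar)%:E =
    ereal_sup [set r | exists (dt : R) (C : set ('I_1 -> X)),
      0 <= dt /\ Fdelta N mX mY 1 dt C /\ dt <= delta 1%N / mY 1 (Yrange N C) /\
      r = (IYX N mY C dt)%:E] ->
  overlap_family (mY 1) (Yrange N Cbar) Cbar (Ycond N Cbar)
    (dbar / (scard Cbar)%:R) F ->
  (exists S, F S /\ dhat = mY 1 S / mY 1 (Yrange N Cbar)) ->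
  (forall S, F S -> mY 1 S / mY 1 (Yrange N Cbar) <= dhat) ->
  (forall n, (1 < n)%N ->
     dbar * (dhat * (scard Cbar)%:R) ^+ n.-1 <= delta n /\ delta n < 1) ->
  capacity N mY delta = (IYX N mY Cbar dbar)%:E.
Proof.
Proof.
move=> tb umX umY mYT minx d10 d1lt prod dbar0 FCbar dbarle Isup famF
  [S0 [FS0 dhatE]] dhatmax hdelta.
have [fC [neC _]] := FCbar.
apply/eqP; rewrite eq_le; apply/andP; split.
  apply: (le_trans (ereal_inf_lbound (x := rate N mY 1 (delta 1%N)) _)).
    by exists 1%N.
  rewrite /rate; apply: ge_ereal_sup => _ [C dC <-].
  have [dt0 [Fd Ieq]] := dist_IYX N mX mY umX umY mYT xstar (delta 1%N) minx d10 d1lt C dC.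
  rewrite Isup; apply: ereal_sup_ubound.
  exists (delta 1%N / mY 1 (Yrange N C)), C; split => //; split => //; split => //.
  by rewrite Ieq invr1 mul1r.
have IE : IYX N mY Cbar dbar = log2 (scard F)%:R.
  exact: (Idelta_fam _ _ _ _ _ _ famF).
rewrite IE; apply/ereal_infP => _ [n n0 <-].
apply: (lower N mY umY mYT xstar (delta 1%N) minx d10 d1lt Cbar dbar dhat F delta n
  prod dbar0 fC neC dbarle famF dhatmax _ _ n0).
  by move=> ->.
by move=> h; exact: (hdelta n h).1.
Qed.
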